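(* Let $a=0.68$, $b=0.1$, $\omega\in\mathbb{R}$ and $0<\varepsilon\le\frac12$, and consider the rotating Hénon map $F_\varepsilon:\mathbb{T}^1\times\mathbb{R}^2\to\mathbb{T}^1\times\mathbb{R}^2$, $$F_\varepsilon(\theta,x,y)=\big(\theta+\omega \ (\mathrm{mod}\ 1),\ 1+y-ax^2+\varepsilon\cos(2\pi\theta),\ bx\big).$$ Let $$x_-=\frac{-(1-b)-\sqrt{(1-b)^2+4a}}{2a},\qquad y_-=bx_-,$$ and $$U_\varepsilon=\mathbb{T}^1\times[x_--1.1\varepsilon,\,x_-+1.1\varepsilon]\times[y_--0.12\varepsilon,\,y_-+0.12\varepsilon].$$ Then there exists an invariant $C^0$ manifold of $F_\varepsilon$ which is homeomorphic to $\mathbb{T}^1$ and is contained in $U_\varepsilon$.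
   Context: $\mathbb{T}^1=\mathbb{R}/\mathbb{Z}$. The point $(x_-,y_-)$ is a fixed point of the Hénon map $(x,y)\mapsto(1+y-ax^2,bx)$ ($x_-\approx-2.0433$). *)

(* Defs.v *)
From Stdlib Require Import Reals Lra.
Open Scope R_scope.

Definition in_Z (r : R) : Prop := exists k : Z, r = IZR k.

Definition henon_a : R := 68 / 100.
Definition henon_b : R := 1 / 10.

(* the fixed point (x_-, y_-) of the unperturbed Hénon map *)
Definition x_minus : R :=
  (- (1 - henon_b) - sqrt ((1 - henon_b) ^ 2 + 4 * henon_a)) / (2 * henon_a).
Definition y_minus : R := henon_b * x_minus.

(* Points of T^1 x R^2 are represented by triples (theta, x, y) in R^3,
   the first coordinate being a lift of the angle in T^1 = R/Z. *)
Definition pt := (R * R * R)%type.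

Definition theta_of (p : pt) : R := fst (fst p).
Definition x_of (p : pt) : R := snd (fst p).
Definition y_of (p : pt) : R := snd p.

Definition same_point (p q : pt) : Prop :=
  in_Z (theta_of p - theta_of q) /\ x_of p = x_of q /\ y_of p = y_of q.

(* the rotating Hénon map F_eps (well defined on T^1 x R^2, since
   cos(2 pi theta) is 1-periodic) *)
Definition F (omega eps : R) (p : pt) : pt :=
  (theta_of p + omega,
   1 + y_of p - henon_a * (x_of p) ^ 2 + eps * cos (2 * PI * theta_of p),
   henon_b * x_of p).

Definition in_U (eps : R) (p : pt) : Prop :=
  x_minus - 11/10 * eps <= x_of p <= x_minus + 11/10 * eps /\
  y_minus - 12/100 * eps <= y_of p <= y_minus + 12/100 * eps.

(* gamma : R -> R^3 is the lift of a topological embedding of the circle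
   T^1 = R/Z into T^1 x R^2: continuous, and two parameters give the same
   point of T^1 x R^2 iff they are equal modulo 1.  (Continuous injective
   maps from the compact T^1 to the Hausdorff T^1 x R^2 are homeomorphisms
   onto their image, and every continuous map T^1 -> T^1 x R^2 has such a
   continuous lift.) *)
Definition circle_embedding (gamma : R -> pt) : Prop :=
  continuity (fun s => theta_of (gamma s)) /\
  continuity (fun s => x_of (gamma s)) /\
  continuity (fun s => y_of (gamma s)) /\
  (forall s t, same_point (gamma s) (gamma t) <-> in_Z (s - t)).

Definition invariant_image (omega eps : R) (gamma : R -> pt) : Prop :=
  (forall s, exists t, same_point (F omega eps (gamma s)) (gamma t)) /\
  (forall t, exists s, same_point (F omega eps (gamma s)) (gamma t)).

(* Main.v *)
Require Import Defs.
From Stdlib Require Import Reals Lra Lia ZArith.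
Open Scope R_scope.

Lemma Rabs_le_inv' x c : Rabs x <= c -> -c <= x <= c.
Proof. unfold Rabs; destruct (Rcase_abs x); lra. Qed.

Lemma Rabs_le' x c : -c <= x <= c -> Rabs x <= c.
Proof. unfold Rabs; destruct (Rcase_abs x); lra. Qed.

Lemma xm_facts : -205/100 <= x_minus <= -204/100 /\
  henon_a * x_minus ^ 2 = 1 - 9/10 * x_minus.
Proof.
  unfold x_minus, henon_a, henon_b.
  set (s := sqrt _).
  assert (Hs0 : 0 <= s) by apply sqrt_pos.
  assert (Hs2 : s * s = 353/100).
  { unfold s; rewrite sqrt_sqrt; lra. }
  assert (1878/1000 <= s <= 1879/1000) by nra.
  replace ((- (1 - 1 / 10) - s) / (2 * (68 / 100))) with ((-90 - 100*s)/136) by field.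
  split; [split|]; try lra.

Qed.

Lemma sqrt_ge32 A : 9/4 <= A -> 3/2 <= sqrt A.
Proof.
  intros H. replace (3/2) with (sqrt (3/2*(3/2))).
  apply sqrt_le_1_alt; lra. apply sqrt_square; lra.
Qed.

Lemma sqrt_gap p r A B m : 0 <= p -> 0 <= r -> p * p = A -> r * r = B ->
  m <= p + r -> m * Rabs (p - r) <= Rabs (A - B).
Proof.
  intros Hp Hr HA HB Hm.
  replace (A - B) with ((p - r) * (p + r)) by (subst; ring).
  rewrite Rabs_mult. rewrite (Rabs_right (p + r)) by lra.
  rewrite Rmult_comm. apply Rmult_le_compat_l. apply Rabs_pos. lra.
Qed.

Definition Tm (om e : R) (X : R -> R) (t : R) : R :=
  - sqrt ((1 + henon_b * X (t - om) + e * cos (2 * PI * t) - X (t + om)) / henon_a).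

Definition Xn om e n := Nat.iter n (Tm om e) (fun _ => x_minus).

Definition good e (X : R -> R) := forall t, Rabs (X t - x_minus) <= 11/10 * e.

Lemma arg_lower om e X t : 0 < e <= 1/2 -> good e X ->
  9/4 <= (1 + henon_b * X (t - om) + e * cos (2 * PI * t) - X (t + om)) / henon_a.
Proof.
  intros He HX. destruct xm_facts as [Hx _].
  pose proof (Rabs_le_inv' _ _ (HX (t - om))).
  pose proof (Rabs_le_inv' _ _ (HX (t + om))).
  pose proof (COS_bound (2 * PI * t)).
  assert (-e <= e * cos (2 * PI * t) <= e) by nra.
  unfold henon_a, henon_b in *. lra.
Qed.

Lemma T_good om e X : 0 < e <= 1/2 -> good e X -> good e (Tm om e X).
Proof.
  intros He HX t. pose proof (arg_lower om e X t He HX) as HA.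
  destruct xm_facts as [Hx Hq].
  unfold Tm. set (A := (_ / henon_a)) in *.
  pose proof (sqrt_ge32 _ HA) as Hs.
  pose proof (Rabs_le_inv' _ _ (HX (t - om))).
  pose proof (Rabs_le_inv' _ _ (HX (t + om))).
  pose proof (COS_bound (2 * PI * t)).
  assert (-e <= e * cos (2 * PI * t) <= e) by nra.
  assert (HAB : Rabs (A - x_minus * x_minus) <= 325/100 * e).
  { apply Rabs_le'. unfold A. unfold henon_a, henon_b in *.
    replace (x_minus * x_minus) with (x_minus ^ 2) by ring.
    assert (x_minus ^ 2 = (1 - 9/10 * x_minus) / (68/100)) by (rewrite <- Hq; field).
    rewrite H3. lra. }
  pose proof (sqrt_gap (sqrt A) (- x_minus) A (x_minus * x_minus) (354/100)
     (sqrt_pos A) ltac:(lra) (sqrt_sqrt A ltac:(lra)) ltac:(ring) ltac:(lra)).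
  replace (- sqrt A - x_minus) with (- (sqrt A - - x_minus)) by ring.
  rewrite Rabs_Ropp. lra.
Qed.

Lemma T_contr om e X1 X2 d : 0 < e <= 1/2 -> good e X1 -> good e X2 ->
  (forall t, Rabs (X1 t - X2 t) <= d) ->
  forall t, Rabs (Tm om e X1 t - Tm om e X2 t) <= 3/5 * d.
Proof.
  intros He H1 H2 Hd t.
  pose proof (arg_lower om e X1 t He H1) as HA1.
  pose proof (arg_lower om e X2 t He H2) as HA2.
  unfold Tm.
  set (A1 := (1 + henon_b * X1 (t - om) + e * cos (2 * PI * t) - X1 (t + om)) / henon_a) in *.
  set (A2 := (1 + henon_b * X2 (t - om) + e * cos (2 * PI * t) - X2 (t + om)) / henon_a) in *.
  pose proof (sqrt_ge32 _ HA1). pose proof (sqrt_ge32 _ HA2).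
  pose proof (Rabs_le_inv' _ _ (Hd (t - om))).
  pose proof (Rabs_le_inv' _ _ (Hd (t + om))).
  assert (HAB : Rabs (A1 - A2) <= 11/10 * d / (68/100)).
  { apply Rabs_le'. unfold A1, A2. unfold henon_a, henon_b in *. lra. }
  pose proof (sqrt_gap (sqrt A1) (sqrt A2) A1 A2 3
     (sqrt_pos _) (sqrt_pos _) (sqrt_sqrt A1 ltac:(lra)) (sqrt_sqrt A2 ltac:(lra)) ltac:(lra)).
  replace (- sqrt A1 - - sqrt A2) with (- (sqrt A1 - sqrt A2)) by ring.
  rewrite Rabs_Ropp. lra.
Qed.

Definition q : R := 3/5.

Lemma Xn_good om e n : 0 < e <= 1/2 -> good e (Xn om e n).
Proof.
  intros He; induction n as [|n IH].
  - intro t; change (Xn om e 0 t) with x_minus. replace (x_minus - x_minus) with 0 by ring; rewrite Rabs_R0; lra.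
  - apply (T_good om e _ He IH).
Qed.

Lemma good_dist e X1 X2 : good e X1 -> good e X2 -> forall t, Rabs (X1 t - X2 t) <= 22/10 * e.
Proof.
  intros H1 H2 t. pose proof (Rabs_le_inv' _ _ (H1 t)). pose proof (Rabs_le_inv' _ _ (H2 t)).
  apply Rabs_le'. lra.
Qed.

Lemma Xn_step om e n : 0 < e <= 1/2 ->
  forall t, Rabs (Xn om e (S n) t - Xn om e n t) <= q ^ n * (22/10 * e).
Proof.
  intros He; induction n as [|n IH]; intro t.
  - rewrite pow_O, Rmult_1_l. apply good_dist; apply Xn_good; auto.
  - change (Xn om e (S (S n))) with (Tm om e (Xn om e (S n))).
    change (Xn om e (S n)) with (Tm om e (Xn om e n)) at 2.
    pose proof (T_contr om e _ _ _ He (Xn_good om e (S n) He) (Xn_good om e n He) IH t).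
    rewrite <- tech_pow_Rmult. unfold q in *. lra.
Qed.

Lemma q_pow_pos n : 0 <= q ^ n.
Proof. apply pow_le. unfold q; lra. Qed.

Lemma Xn_cauchy om e n k : 0 < e <= 1/2 ->
  forall t, Rabs (Xn om e (n + k) t - Xn om e n t) <= 55/10 * e * q ^ n * (1 - q ^ k).
Proof.
  intros He t; induction k as [|k IH].
  - rewrite Nat.add_0_r. unfold Rminus at 1; rewrite Rplus_opp_r, Rabs_R0. simpl. lra.
  - rewrite Nat.add_succ_r.
    pose proof (Xn_step om e (n + k) He t) as Hs.
    rewrite pow_add in Hs.
    replace (Xn om e (S (n + k)) t - Xn om e n t) with
      ((Xn om e (S (n + k)) t - Xn om e (n + k) t) + (Xn om e (n + k) t - Xn om e n t)) by ring.
    eapply Rle_trans. apply Rabs_triang.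
    assert (E : 55/10 * e * q ^ n * (1 - q ^ S k) =
       q ^ n * q ^ k * (22/10 * e) + 55/10 * e * q ^ n * (1 - q ^ k)) by (rewrite <- tech_pow_Rmult; unfold q; field).
    rewrite E. lra.
Qed.

Lemma Xn_cauchy' om e n m : 0 < e <= 1/2 -> (n <= m)%nat ->
  forall t, Rabs (Xn om e m t - Xn om e n t) <= 55/10 * e * q ^ n.
Proof.
  intros He Hnm t. replace m with (n + (m - n))%nat by lia.
  eapply Rle_trans. apply Xn_cauchy; auto.
  pose proof (q_pow_pos n). pose proof (q_pow_pos (m - n)).
  assert (0 <= 55/10 * e * q ^ n) by (apply Rmult_le_pos; lra).
  nra.
Qed.

Lemma q_small c : 0 < c -> exists N, q ^ N < c.
Proof.
  intros Hc. destruct (pow_lt_1_zero q ltac:(unfold q; rewrite Rabs_right; lra) c Hc) as [N HN].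
  exists N. specialize (HN N (le_n N)). rewrite Rabs_right in HN. auto.
  apply Rle_ge, q_pow_pos.
Qed.

Lemma Xn_Cauchy om e t : 0 < e <= 1/2 -> Cauchy_crit (fun n => Xn om e n t).
Proof.
  intros He ep Hep.
  destruct (q_small (ep / (12 * e))) as [N HN].
  { apply Rdiv_lt_0_compat; lra. }
  exists N. intros n m Hn Hm. unfold R_dist.
  pose proof (Xn_cauchy' om e N n He Hn t).
  pose proof (Xn_cauchy' om e N m He Hm t).
  replace (Xn om e n t - Xn om e m t) with
    ((Xn om e n t - Xn om e N t) - (Xn om e m t - Xn om e N t)) by ring.
  eapply Rle_lt_trans. apply Rabs_triang. rewrite Rabs_Ropp.
  assert (q ^ N * (12 * e) < ep).
  { apply (Rmult_lt_compat_r (12 * e)) in HN; [|lra].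
    unfold Rdiv in HN. rewrite Rmult_assoc, Rinv_l in HN; lra. }
  lra.
Qed.

Definition Xlim om e (He : 0 < e <= 1/2) (t : R) : R :=
  proj1_sig (R_complete _ (Xn_Cauchy om e t He)).

Lemma Xlim_cv om e He t : Un_cv (fun n => Xn om e n t) (Xlim om e He t).
Proof. unfold Xlim. destruct (R_complete _ _) as [l Hl]. exact Hl. Qed.

Lemma lim_bound U l c C n : Un_cv U l -> (forall m, (n <= m)%nat -> Rabs (U m - c) <= C) ->
  Rabs (l - c) <= C.
Proof.
  intros Hcv HB. destruct (Rle_lt_dec (Rabs (l - c)) C) as [|Hlt]; auto.
  destruct (Hcv (Rabs (l - c) - C) ltac:(lra)) as [N HN].
  specialize (HN (max N n) (Nat.le_max_l _ _)). specialize (HB (max N n) (Nat.le_max_r _ _)).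
  unfold R_dist in HN.
  pose proof (Rabs_triang (U (max N n) - c) (l - U (max N n))).
  replace (U (max N n) - c + (l - U (max N n))) with (l - c) in H by ring.
  rewrite <- Rabs_Ropp in HN. replace (- (U (max N n) - l)) with (l - U (max N n)) in HN by ring.
  lra.
Qed.

Lemma Xlim_near om e He n t : Rabs (Xlim om e He t - Xn om e n t) <= 55/10 * e * q ^ n.
Proof.
  apply (lim_bound _ _ _ _ n (Xlim_cv om e He t)).
  intros m Hm. apply Xn_cauchy'; auto.
Qed.

Lemma Xlim_good om e He : good e (Xlim om e He).
Proof.
  intro t. apply (lim_bound _ _ _ _ 0 (Xlim_cv om e He t)).
  intros m _. apply Xn_good; auto.
Qed.

Lemma Xn_per om e n t : Xn om e n (t + 1) = Xn om e n t.
Proof.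
  revert t; induction n as [|n IH]; intro t; [reflexivity|].
  change (Xn om e (S n)) with (Tm om e (Xn om e n)). unfold Tm.
  replace (t + 1 - om) with ((t - om) + 1) by ring.
  replace (t + 1 + om) with ((t + om) + 1) by ring.
  rewrite !IH.
  replace (2 * PI * (t + 1)) with (2 * PI * t + 2 * INR 1 * PI) by (simpl; ring).
  rewrite cos_period. reflexivity.
Qed.

Lemma Xlim_eq om e He t l : Un_cv (fun n => Xn om e n t) l -> Xlim om e He t = l.
Proof. intros H. exact (UL_sequence _ _ _ (Xlim_cv om e He t) H). Qed.

Lemma Xlim_per om e He t : Xlim om e He (t + 1) = Xlim om e He t.
Proof.
  apply Xlim_eq. intros ep Hep. destruct (Xlim_cv om e He t ep Hep) as [N HN].
  exists N. intros n Hn. rewrite Xn_per. auto.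
Qed.

Lemma Xlim_perZ om e He k : forall t, Xlim om e He (t + IZR k) = Xlim om e He t.
Proof.
  induction k using Z.peano_ind; intro t.
  - rewrite Rplus_0_r. reflexivity.
  - rewrite succ_IZR. replace (t + (IZR k + 1)) with ((t + IZR k) + 1) by ring.
    rewrite Xlim_per. auto.
  - rewrite <- Z.sub_1_r, minus_IZR.
    rewrite <- (Xlim_per om e He (t + (IZR k - IZR 1))).
    replace (t + (IZR k - IZR 1) + 1) with (t + IZR k) by (simpl; ring).
    apply IHk.
Qed.

Lemma cont_shift X c : continuity X -> continuity (fun t => X (t + c)).
Proof.
  intros H. apply (continuity_comp (fun t => t + c) X); auto.
  apply (continuity_plus id (fun _ => c)).
  apply derivable_continuous, derivable_id.
  apply continuity_const. intros ? ?; reflexivity.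
Qed.

Lemma T_cont om e X : 0 < e <= 1/2 -> good e X -> continuity X -> continuity (Tm om e X).
Proof.
  intros He HX HC t.
  set (g := fun t => (1 + henon_b * X (t - om) + e * cos (2 * PI * t) - X (t + om)) / henon_a).
  assert (Hg : continuity g).
  { unfold g.
    apply (continuity_mult
      (fun t => 1 + henon_b * X (t - om) + e * cos (2 * PI * t) - X (t + om))
      (fun _ => / henon_a)).
    2: { apply continuity_const. intros ? ?; reflexivity. }
    apply (continuity_minus _ (fun t => X (t + om))).
    2: apply cont_shift; auto.
    apply (continuity_plus (fun t => 1 + henon_b * X (t - om)) (fun t => e * cos (2 * PI * t))).
    - apply (continuity_plus (fun _ => 1) (fun t => henon_b * X (t - om))).
      + apply continuity_const. intros ? ?; reflexivity.
      + apply (continuity_scal (fun t => X (t - om))). apply cont_shift; auto.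
    - apply (continuity_scal (fun t => cos (2 * PI * t))).
      apply (continuity_comp (fun t => 2 * PI * t) cos).
      + apply (continuity_scal id). apply derivable_continuous, derivable_id.
      + apply continuity_cos. }
  apply (continuity_pt_comp g (fun z => - sqrt z)). apply Hg.
  apply (continuity_pt_opp sqrt). apply continuity_pt_sqrt.
  pose proof (arg_lower om e X t He HX). unfold g. lra.
Qed.

Lemma Xn_cont om e n : 0 < e <= 1/2 -> continuity (Xn om e n).
Proof.
  intros He. induction n as [|n IH].
  - apply continuity_const. intros ? ?; reflexivity.
  - apply T_cont; auto. apply Xn_good; auto.
Qed.

Lemma Xlim_cont om e He : continuity (Xlim om e He).
Proof.
  intros t0 ep Hep.
  destruct (q_small (ep / (20 * e))) as [N HN].
  { apply Rdiv_lt_0_compat; lra. }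
  assert (HN' : 55/10 * e * q ^ N < ep / 3).
  { apply (Rmult_lt_compat_r (20 * e)) in HN; [|lra].
    unfold Rdiv in HN. rewrite Rmult_assoc, Rinv_l in HN; lra. }
  destruct (Xn_cont om e N He t0 (ep / 3) ltac:(lra)) as [al [Hal Hc]].
  exists al. split; auto. intros x Hx.
  specialize (Hc x Hx). simpl in *. unfold R_dist in *.
  pose proof (Xlim_near om e He N x). pose proof (Xlim_near om e He N t0).
  replace (Xlim om e He x - Xlim om e He t0) with
    ((Xlim om e He x - Xn om e N x) + (Xn om e N x - Xn om e N t0) - (Xlim om e He t0 - Xn om e N t0)) by ring.
  eapply Rle_lt_trans. apply Rabs_triang. rewrite Rabs_Ropp.
  pose proof (Rabs_triang (Xlim om e He x - Xn om e N x) (Xn om e N x - Xn om e N t0)).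
  lra.
Qed.

Lemma Xlim_fix om e He t : Xlim om e He t = Tm om e (Xlim om e He) t.
Proof.
  set (X := Xlim om e He).
  assert (Hb : forall n, Rabs (X t - Tm om e X t) <= 11 * e * q ^ n).
  { intro n.
    pose proof (Xlim_near om e He (S n) t) as H1.
    change (Xn om e (S n)) with (Tm om e (Xn om e n)) in H1.
    pose proof (T_contr om e (Xn om e n) X _ He (Xn_good om e n He) (Xlim_good om e He)
       (fun s => ltac:(rewrite <- Rabs_Ropp; replace (- (Xn om e n s - X s)) with (X s - Xn om e n s) by ring;
                       apply (Xlim_near om e He n s))) t) as H2.
    rewrite <- tech_pow_Rmult in H1.
    replace (X t - Tm om e X t) with ((X t - Tm om e (Xn om e n) t) + (Tm om e (Xn om e n) t - Tm om e X t)) by ring.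
    eapply Rle_trans. apply Rabs_triang.
    pose proof (q_pow_pos n). assert (0 <= e * q ^ n) by (apply Rmult_le_pos; lra).
    replace (55 / 10 * e * (q * q ^ n)) with (33/10 * (e * q ^ n)) in H1 by (unfold q; field).
    replace (3/5 * (55 / 10 * e * q ^ n)) with (33/10 * (e * q ^ n)) in H2 by (unfold q; field).
    replace (11 * e * q ^ n) with (11 * (e * q ^ n)) by ring.
    fold X in H1. lra. }
  destruct (Req_dec (X t - Tm om e X t) 0) as [H0|H0]; [lra|].
  exfalso. pose proof (Rabs_pos_lt _ H0) as Hp.
  destruct (q_small (Rabs (X t - Tm om e X t) / (12 * e))) as [N HN].
  { apply Rdiv_lt_0_compat; lra. }
  specialize (Hb N).
  apply (Rmult_lt_compat_r (12 * e)) in HN; [|lra].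
  unfold Rdiv in HN. rewrite Rmult_assoc, Rinv_l in HN; [|lra].
  pose proof (q_pow_pos N). nra.
Qed.

Lemma Xlim_eqn om e He s :
  Xlim om e He (s + om) = 1 + henon_b * Xlim om e He (s - om)
     - henon_a * (Xlim om e He s) ^ 2 + e * cos (2 * PI * s).
Proof.
  set (X := Xlim om e He).
  pose proof (arg_lower om e X s He (Xlim_good om e He)) as HA.
  assert (Hx : X s ^ 2 = (1 + henon_b * X (s - om) + e * cos (2 * PI * s) - X (s + om)) / henon_a).
  { unfold X at 1. rewrite Xlim_fix. fold X. unfold Tm.
    replace ((- sqrt _) ^ 2) with (sqrt ((1 + henon_b * X (s - om) + e * cos (2 * PI * s) - X (s + om)) / henon_a) *
       sqrt ((1 + henon_b * X (s - om) + e * cos (2 * PI * s) - X (s + om)) / henon_a)) by ring.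
    apply sqrt_sqrt. lra. }
  rewrite Hx. unfold henon_a. field.
Qed.

Theorem mainTheorem8 (omega eps : R) (Heps0 : 0 < eps) (Heps1 : eps <= 1/2) :
  exists gamma : R -> pt,
    circle_embedding gamma /\
    invariant_image omega eps gamma /\
    (forall s, in_U eps (gamma s)).
Proof.
  set (He := conj Heps0 Heps1 : 0 < eps <= 1/2).
  set (X := Xlim omega eps He).
  exists (fun s => (s, X s, henon_b * X (s - omega))).
  split; [|split].
  - unfold circle_embedding, theta_of, x_of, y_of; simpl.
    split; [|split; [|split]].
    + apply derivable_continuous, derivable_id.
    + apply Xlim_cont.
    + apply (continuity_scal (fun s => X (s - omega))). apply cont_shift. apply Xlim_cont.
    + intros s t. unfold same_point, theta_of, x_of, y_of; simpl. split.
      * intros [H _]; exact H.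
      * intros [k Hk]. split; [exists k; exact Hk|].
        assert (Hs : s = t + IZR k) by lra.
        unfold X. rewrite Hs, Xlim_perZ.
        replace (t + IZR k - omega) with ((t - omega) + IZR k) by ring.
        rewrite Xlim_perZ. split; reflexivity.
  - unfold invariant_image, same_point, F, theta_of, x_of, y_of; simpl. split.
    + intros s. exists (s + omega). split; [exists 0%Z; simpl; ring|].
      replace (s + omega - omega) with s by ring.
      unfold X; rewrite Xlim_eqn. split; reflexivity.
    + intros t. exists (t - omega). split; [exists 0%Z; simpl; ring|].
      replace (t - omega - omega) with ((t - omega) - omega) by ring.
      pose proof (Xlim_eqn omega eps He (t - omega)) as E.
      replace (t - omega + omega) with t in E by ring.
      fold X in E. rewrite E. split; reflexivity.
  - intros s. unfold in_U, x_of, y_of; simpl.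
    pose proof (Rabs_le_inv' _ _ (Xlim_good omega eps He s)).
    pose proof (Rabs_le_inv' _ _ (Xlim_good omega eps He (s - omega))).
    fold X in H, H0. unfold y_minus, henon_b. lra.
Qed.
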